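(* For all even integers $a, b \ge 2$, $R_\mathrm{ord}(M_a^\mathrm{nest}, M_b^\mathrm{nest}) = a + b - 2$.
   Context: All graphs are finite, simple and undirected, and a graph of order $n$ has vertex set $\{0,1,\ldots,n-1\}$; $K_n$ is the complete graph on $\{0,\ldots,n-1\}$. A $2$-edge-coloring of $K_n$ assigns each edge a color in $\{1,2\}$. For a graph $H$ and such a coloring, an embedding of $H$ in color $j$ is an injective map $\varphi\colon V(H)\to V(K_n)$ such that for every edge $uv$ of $H$ the edge $\{\varphi(u),\varphi(v)\}$ has color $j$; it is increasing if $\varphi(0)<\cdots<\varphi(|H|-1)$. The ordered Ramsey number $R_\mathrm{ord}(H_1,H_2)$ is the smallest $n$ such that every $2$-edge-coloring of $K_n$ admits an increasing embedding of $H_1$ in color $1$ or an increasing embedding of $H_2$ in color $2$. For even $n\ge2$, the nested matching $M_n^\mathrm{nest}$ is the graph of order $n$ whose edges are exactly $\{v, n-1-v\}$ for $0\le v\le n/2-1$. *)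

(* Defs.v *)
From mathcomp Require Import all_boot.
Set Implicit Arguments. Unset Strict Implicit. Unset Printing Implicit Defensive.

Definition graph (m : nat) := rel 'I_m.

(* A 2-edge-colouring of K_n: every pair (x,y) is given a colour in bool,
   true = colour 1, false = colour 2.  The colour of the unordered edge {x,y}
   (x <> y) is read off the ordered pair (min, max); values on other pairs
   are irrelevant, so quantifying over all such functions is the same as
   quantifying over all 2-edge-colourings of K_n. *)
Definition coloring (n : nat) := 'I_n -> 'I_n -> bool.

Definition edge_color n (c : coloring n) (x y : 'I_n) : bool :=
  if x < y then c x y else c y x.

Definition inc_embedding m (H : graph m) n (c : coloring n) (j : bool) : Prop :=
  exists f : 'I_m -> 'I_n,
    (forall u v : 'I_m, u < v -> f u < f v) /\
    (forall u v : 'I_m, H u v -> edge_color c (f u) (f v) = j).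

Definition ord_ramsey_prop m1 (H1 : graph m1) m2 (H2 : graph m2) (n : nat) : Prop :=
  forall c : coloring n, inc_embedding H1 c true \/ inc_embedding H2 c false.

Definition is_ord_ramsey_number m1 (H1 : graph m1) m2 (H2 : graph m2) (r : nat) : Prop :=
  ord_ramsey_prop H1 H2 r /\ (forall n, ord_ramsey_prop H1 H2 n -> r <= n).

Definition nested_matching (m : nat) : graph m :=
  fun u v => ((u < m./2) && (val v == m.-1 - u)) || ((v < m./2) && (val u == m.-1 - v)).
Arguments nested_matching m : clear implicits.

(* Main.v *)
Require Import Defs.
From mathcomp Require Import all_boot.
From mathcomp Require Import zify.

Lemma half2 p : (2 * p)./2 = p.
Proof. by rewrite mul2n doubleK. Qed.

Lemma mono_gap m n (f : 'I_m -> 'I_n) :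
  (forall u v : 'I_m, u < v -> f u < f v) ->
  forall k (i j : 'I_m), val j = val i + k -> f i + k <= f j.
Proof.
move=> mono; elim=> [|k IH] i j hj.
- rewrite addn0; have -> : j = i by apply: val_inj; rewrite /= hj addn0.
  done.
- have hk : i + k < m by rewrite (leq_trans _ (ltn_ord j)) // hj addnS.
  have h1 : f (Ordinal hk) < f j by apply: mono; rewrite /= hj addnS.
  have h2 := IH i (Ordinal hk) erefl. lia.
Qed.

Lemma lower p q n : 1 <= p -> 1 <= q -> n < 2 * p + 2 * q - 2 ->
  ~ ord_ramsey_prop (nested_matching (2 * p)) (nested_matching (2 * q)) n.
Proof.
move=> p1 q1 hn H.
have [[f [mono col]]|[f [mono col]]] := H (fun x y => (val y - val x <= 2 * p - 2)).
- have h0 : 0 < 2 * p by lia.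
  have h1 : (2 * p).-1 < 2 * p by lia.
  have hm : nested_matching (2 * p) (Ordinal h0) (Ordinal h1).
    rewrite /nested_matching /= half2 subn0 eqxx; apply/orP; left.
    by apply/andP; split => //.
  have := col _ _ hm. rewrite /edge_color.
  have lt : f (Ordinal h0) < f (Ordinal h1) by apply: mono => /=; lia.
  rewrite lt => /= hc.
  have := @mono_gap _ _ f mono ((2 * p).-1) (Ordinal h0) (Ordinal h1) erefl.
  move=> /= hg. lia.
- have h0 : 0 < 2 * q by lia.
  have h1 : (2 * q).-1 < 2 * q by lia.
  have hu : q.-1 < 2 * q by lia.
  have hv : q < 2 * q by lia.
  have hm : nested_matching (2 * q) (Ordinal hu) (Ordinal hv).
    rewrite /nested_matching /= half2; apply/orP; left.
    apply/andP; split; first by lia.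
    apply/eqP; lia.
  have := col _ _ hm. rewrite /edge_color.
  have lt : f (Ordinal hu) < f (Ordinal hv) by apply: mono => /=; lia.
  rewrite lt => /= /negbT hc. rewrite -ltnNge in hc.
  have g1 := @mono_gap _ _ f mono (q.-1) (Ordinal h0) (Ordinal hu) erefl.
  have g2 := @mono_gap _ _ f mono (q.-1) (Ordinal hv) (Ordinal h1) ltac:(simpl; lia).
  simpl in g1, g2.
  have := ltn_ord (f (Ordinal h1)). lia.
Qed.

Definition col n (c : coloring n.+1) (x y : nat) : bool :=
  edge_color c (inord x) (inord y).
Arguments col {n}.

Definition Good n (c : coloring n.+1) m (j : bool) (k i0 : nat) : Prop :=
  exists g : nat -> nat,
    [/\ (forall s t, s < t -> t < k -> g s < g t),
        (forall t, t < k -> i0 <= g t /\ g t < m) &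
        (forall t, t < k -> col c (g t) (n - g t) = j)].

Arguments Good {n}.

Lemma good_cons n (c : coloring n.+1) m j k i0 :
  i0 < m -> col c i0 (n - i0) = j -> Good c m j k i0.+1 -> Good c m j k.+1 i0.
Proof.
move=> him hc [g [gm gb gc]].
exists (fun t => if t is t'.+1 then g t' else i0); split.
- move=> [|s] [|t] //= hst htk.
  + by have [h _] := gb t htk; lia.
  + by apply: gm.
- move=> [|t] /= htk; first by split; lia.
  by have [h1 h2] := gb t htk; split; lia.
- by move=> [|t] //= htk; apply: gc.
Qed.

Lemma good_weak n (c : coloring n.+1) m j k i0 :
  Good c m j k i0.+1 -> Good c m j k i0.
Proof.
move=> [g [gm gb gc]]; exists g; split => // t ht.
by have [h1 h2] := gb t ht; lia.
Qed.

Lemma pigeon n (c : coloring n.+1) m K : forall k1 k2 i0,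
  k1 + k2 <= K -> i0 + k1 + k2 <= m + 1 ->
  Good c m true k1 i0 \/ Good c m false k2 i0.
Proof.
elim: K => [|K IH] k1 k2 i0 hK hm.
- left; exists id; split => // t; lia.
- case: k1 hK hm => [|k1] hK hm; first by left; exists id; split => // t; lia.
  case: k2 hK hm => [|k2] hK hm; first by right; exists id; split => // t; lia.
  case E: (col c i0 (n - i0)).
  + have [G|G] := IH k1 k2.+1 i0.+1 ltac:(lia) ltac:(lia).
    * by left; apply: good_cons => //; lia.
    * by right; apply: good_weak.
  + have [G|G] := IH k1.+1 k2 i0.+1 ltac:(lia) ltac:(lia).
    * by left; apply: good_weak.
    * by right; apply: good_cons => //; lia.
Qed.

Lemma edge_color_sym n (c : coloring n) (x y : 'I_n) :
  x != y -> edge_color c x y = edge_color c y x.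
Proof.
rewrite /edge_color => neq; case: (ltngtP x y) => // e.
by move: neq; rewrite (val_inj e) eqxx.
Qed.

Lemma build n m k (c : coloring n.+1) j :
  n.+1 = 2 * m -> Good c m j k 0 -> inc_embedding (nested_matching (2 * k)) c j.
Proof.
move=> hn [g [gm gb gc]].
pose h (u : nat) := if u < k then g u else n - g ((2 * k).-1 - u).
have hv : forall u : 'I_(2 * k), h u < n.+1.
  move=> u; rewrite /h; case: ifP => hu; last by lia.
  by have [_ h2] := gb u hu; lia.
exists (fun u => inord (h u)); split.
- move=> u v huv; rewrite !inordK ?hv // /h.
  have := ltn_ord u; have := ltn_ord v => lv lu.
  case: (ltnP u k) => hu; case: (ltnP v k) => hw.
  + by apply: gm.
  + have [_ a1] := gb u hu.
    have [_ a2] := gb ((2 * k).-1 - v) ltac:(lia). lia.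
  + lia.
  + have := gm ((2 * k).-1 - v) ((2 * k).-1 - u) ltac:(lia) ltac:(lia).
    have [_ a1] := gb ((2 * k).-1 - u) ltac:(lia). lia.
- move=> u v; rewrite /nested_matching half2.
  have := ltn_ord u; have := ltn_ord v => lv lu.
  case/orP => /andP [hu /eqP /= he].
  + have hv2 : (v < k) = false by apply/negbTE; rewrite -leqNgt; lia.
    have e2 : (2 * k).-1 - v = u by lia.
    rewrite /h hu hv2 e2. exact: gc.
  + have hv2 : (u < k) = false by apply/negbTE; rewrite -leqNgt; lia.
    have e2 : (2 * k).-1 - u = v by lia.
    rewrite edge_color_sym; last first.
      apply/negP => /eqP/(congr1 (@nat_of_ord _)); rewrite !inordK ?hv // /h hu hv2 e2.
      by have [_ a1] := gb v hu; lia.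
    rewrite /h hu hv2 e2. exact: gc.
Qed.

Lemma upper p q n : 1 <= p -> 1 <= q -> n.+1 = 2 * p + 2 * q - 2 ->
  ord_ramsey_prop (nested_matching (2 * p)) (nested_matching (2 * q)) n.+1.
Proof.
move=> p1 q1 hn c.
have [G|G] := @pigeon n c (p + q - 1) (p + q) p q 0 (leqnn _) ltac:(lia).
- left; apply: (@build n (p + q - 1) _ c _ _ G); lia.
- right; apply: (@build n (p + q - 1) _ c _ _ G); lia.
Qed.

Theorem theorem4p27 (a b : nat) :
  ~~ odd a -> 2 <= a -> ~~ odd b -> 2 <= b ->
  is_ord_ramsey_number (nested_matching a) (nested_matching b) (a + b - 2).
Proof.
move=> ea a2 eb b2.
have ha := odd_double_half a; have hb := odd_double_half b.
rewrite (negbTE ea) add0n -mul2n in ha.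
rewrite (negbTE eb) add0n -mul2n in hb.
move: a2 b2; rewrite -ha -hb; set p := a./2; set q := b./2 => a2 b2.
split.
- have -> : 2 * p + 2 * q - 2 = (2 * p + 2 * q - 3).+1 by lia.
  apply: upper; lia.
- move=> n H; rewrite leqNgt; apply/negP => hn.
  exact: (@lower p q n ltac:(lia) ltac:(lia) hn H).
Qed.
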